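(* The axiom systems $EL_{int}$ and $PAL_{int}$ are sound with respect to the class of all topo-models: every theorem of $EL_{int}$ and every theorem of $PAL_{int}$ is valid in every topo-model.
   Context: Fix a countable set $\mathit{Prop}$ of propositional variables and a finite non-empty set $\mathcal{A}$ of agents. $\mathcal{L}_{PAL_{int}}$: $\varphi ::= p \mid \neg\varphi \mid \varphi\wedge\varphi \mid K_i\varphi \mid \mathrm{int}(\varphi)\mid [\varphi]\varphi$; $\mathcal{L}_{EL_{int}}$ is its fragment without $[\cdot]$; $\bot:=p\wedge\neg p$. Topo-models: $(X,\tau)$ a topological space with interior operator $\mathrm{Int}$. A neighbourhood function set $\Phi$ is a set of partial functions $\theta$ from $X$ to functions $\mathcal{A}\to\tau$ such that for all $x,y\in Dom(\theta)$, $i\in\mathcal{A}$, $U\in\tau$: (1) $\theta(x)(i)\in\tau$; (2) $x\in\theta(x)(i)$; (3) $\theta(x)(i)\subseteq Dom(\theta)$; (4) $y\in\theta(x)(i)$ implies $\theta(x)(i)=\theta(y)(i)$; (5) $\theta|_U\in\Phi$, where $Dom(\theta|_U)=Dom(\theta)\cap U$, $\theta|_U(x)(i)=\theta(x)(i)\cap U$. A topo-model is $(X,\tau,\Phi,V)$ with $V(p)\subseteq X$. Neighbourhood situations are $(x,\theta)$, $\theta\in\Phi$, $x\in Dom(\theta)$. Semantics: $(x,\theta)\models p$ iff $x\in V(p)$; Booleans usual; $(x,\theta)\models K_i\varphi$ iff $(y,\theta)\models\varphi$ for all $y\in\theta(x)(i)$; $(x,\theta)\models\mathrm{int}(\varphi)$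 iff $x\in\mathrm{Int}([\![\varphi]\!]^\theta)$ with $[\![\varphi]\!]^\theta=\{y\in Dom(\theta)\mid(y,\theta)\models\varphi\}$; $(x,\theta)\models[\varphi]\psi$ iff $(x,\theta)\models\mathrm{int}(\varphi)$ implies $(x,\theta^\varphi)\models\psi$, with $\theta^\varphi=\theta|_{\mathrm{Int}([\![\varphi]\!]^\theta)}$. Validity = truth at all neighbourhood situations. $EL_{int}$: axioms: propositional tautologies; $K_i(\varphi\to\psi)\to(K_i\varphi\to K_i\psi)$; $K_i\varphi\to\varphi$; $K_i\varphi\to K_iK_i\varphi$; $\neg K_i\varphi\to K_i\neg K_i\varphi$; $\mathrm{int}(\varphi\to\psi)\to(\mathrm{int}(\varphi)\to\mathrm{int}(\psi))$; $\mathrm{int}(\varphi)\to\varphi$; $\mathrm{int}(\varphi)\to\mathrm{int}(\mathrm{int}(\varphi))$; $K_i\varphi\to\mathrm{int}(\varphi)$; rules: modus ponens, from $\varphi$ infer $K_i\varphi$, from $\varphi$ infer $\mathrm{int}(\varphi)$. $PAL_{int}$ adds the axioms (R1) $[\varphi]p\leftrightarrow(\mathrm{int}(\varphi)\to p)$; (R2) $[\varphi]\neg\psi\leftrightarrow(\mathrm{int}(\varphi)\to\neg[\varphi]\psi)$; (R3) $[\varphi](\psi\wedge\chi)\leftrightarrow[\varphi]\psi\wedge[\varphi]\chi$; (R4) $[\varphi]\mathrm{int}(\psi)\leftrightarrow(\mathrm{int}(\varphi)\to\mathrm{int}([\varphi]\psi))$; (R5) $[\varphi]K_i\psi\leftrightarrow(\mathrm{int}(\varphi)\to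 K_i[\varphi]\psi)$; (R6) $[\varphi][\psi]\chi\leftrightarrow[\neg[\varphi]\neg\mathrm{int}(\psi)]\chi$, and the rule from $\varphi$ infer $[\psi]\varphi$. *)

(* Defs.v *)
From HB Require Import structures.
From mathcomp Require Import all_boot all_order.
From mathcomp Require Import boolp classical_sets topology.
Set Implicit Arguments. Unset Strict Implicit. Unset Printing Implicit Defensive.
Local Open Scope classical_set_scope.

Section Syntax.
Variables (Prp : countType) (Ag : finType).

Inductive form : Type :=
| Var : Prp -> form
| Neg : form -> form
| And : form -> form -> form
| K : Ag -> form -> form
| Int : form -> form
| Ann : form -> form -> form.  (* Ann phi psi = [phi]psi *)

Definition Imp (a b : form) : form := Neg (And a (Neg b)).
Definition Iff (a b : form) : form := And (Imp a b) (Imp b a).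

Fixpoint ann_free (f : form) : Prop :=
  match f with
  | Var _ => True
  | Neg a => ann_free a
  | And a b => ann_free a /\ ann_free b
  | K _ a => ann_free a
  | Int a => ann_free a
  | Ann _ _ => False
  end.

(* propositional evaluation, treating non-Boolean subformulas as atoms *)
Fixpoint peval (v : form -> Prop) (f : form) : Prop :=
  match f with
  | Neg a => ~ peval v a
  | And a b => peval v a /\ peval v b
  | _ => v f
  end.

Definition taut (f : form) : Prop := forall v, peval v f.

Inductive ax_EL : form -> Prop :=
| ax_taut f : taut f -> ax_EL f
| ax_K i a b : ax_EL (Imp (K i (Imp a b)) (Imp (K i a) (K i b)))
| ax_T i a : ax_EL (Imp (K i a) a)
| ax_4 i a : ax_EL (Imp (K i a) (K i (K i a)))
| ax_5 i a : ax_EL (Imp (Neg (K i a)) (K i (Neg (K i a))))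
| ax_Kint a b : ax_EL (Imp (Int (Imp a b)) (Imp (Int a) (Int b)))
| ax_Tint a : ax_EL (Imp (Int a) a)
| ax_4int a : ax_EL (Imp (Int a) (Int (Int a)))
| ax_Kint_link i a : ax_EL (Imp (K i a) (Int a)).

Inductive ax_R : form -> Prop :=
| ax_R1 a p : ax_R (Iff (Ann a (Var p)) (Imp (Int a) (Var p)))
| ax_R2 a b : ax_R (Iff (Ann a (Neg b)) (Imp (Int a) (Neg (Ann a b))))
| ax_R3 a b c : ax_R (Iff (Ann a (And b c)) (And (Ann a b) (Ann a c)))
| ax_R4 a b : ax_R (Iff (Ann a (Int b)) (Imp (Int a) (Int (Ann a b))))
| ax_R5 i a b : ax_R (Iff (Ann a (K i b)) (Imp (Int a) (K i (Ann a b))))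
| ax_R6 a b c :
    ax_R (Iff (Ann a (Ann b c)) (Ann (Neg (Ann a (Neg (Int b)))) c)).

Inductive EL_thm : form -> Prop :=
| EL_ax f : ax_EL f -> ann_free f -> EL_thm f
| EL_mp a b : EL_thm a -> EL_thm (Imp a b) -> EL_thm b
| EL_necK i a : EL_thm a -> EL_thm (K i a)
| EL_necInt a : EL_thm a -> EL_thm (Int a).

Inductive PAL_thm : form -> Prop :=
| PAL_ax f : ax_EL f -> PAL_thm f
| PAL_red f : ax_R f -> PAL_thm f
| PAL_mp a b : PAL_thm a -> PAL_thm (Imp a b) -> PAL_thm b
| PAL_necK i a : PAL_thm a -> PAL_thm (K i a)
| PAL_necInt a : PAL_thm a -> PAL_thm (Int a)
| PAL_necAnn b a : PAL_thm a -> PAL_thm (Ann b a).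

End Syntax.

Section Semantics.
Variables (Prp : countType) (Ag : finType) (X : topologicalType).

(* partial functions from X to (Ag -> set X); None = outside the domain *)
Definition nbfun := X -> option (Ag -> set X).

Definition Dom (th : nbfun) : set X := [set x | th x <> None].

Definition restr (th : nbfun) (U : set X) : nbfun :=
  fun x => if `[< U x >] then
             match th x with
             | Some g => Some (fun i => g i `&` U)
             | None => None
             end
           else None.

Definition nbfun_set_ax (Phi : set nbfun) : Prop :=
  forall th, Phi th ->
    (forall x g, th x = Some g -> forall i,
        open (g i)                                           (* (1) *)
        /\ g i x                                             (* (2) *)
        /\ g i `<=` Dom th                                   (* (3) *)
        /\ (forall y h, th y = Some h -> g i y -> g i = h i)) (* (4) *)
    /\ (forall U, open U -> Phi (restr th U)).                 (* (5) *)

Record topo_model := TopoModel {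
  tm_Phi : set nbfun;
  tm_Phi_ax : nbfun_set_ax tm_Phi;
  tm_V : Prp -> set X
}.

Variable M : topo_model.

Fixpoint sat (f : form Prp Ag) (th : nbfun) (x : X) : Prop :=
  match f with
  | Var p => tm_V M p x
  | Neg a => ~ sat a th x
  | And a b => sat a th x /\ sat b th x
  | K i a => forall g, th x = Some g -> forall y, g i y -> sat a th y
  | Int a => interior [set y | Dom th y /\ sat a th y] x
  | Ann a b =>
      interior [set y | Dom th y /\ sat a th y] x ->
      sat b (restr th (interior [set y | Dom th y /\ sat a th y])) x
  end.

Definition valid (f : form Prp Ag) : Prop :=
  forall th x, tm_Phi M th -> Dom th x -> sat f th x.

End Semantics.

(* Main.v *)
Require Import Defs.
From mathcomp Require Import all_boot all_order.
From mathcomp Require Import boolp classical_sets topology.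
From Stdlib Require Import Classical.
Set Implicit Arguments. Unset Strict Implicit. Unset Printing Implicit Defensive.
Local Open Scope classical_set_scope.

Section Sound.
Variables (Prp : countType) (Ag : finType) (X : topologicalType)
  (M : topo_model Prp Ag X).

Notation sat := (Defs.sat M).
Local Notation Dom := (@Defs.Dom Ag X).
Local Notation restr := (@Defs.restr Ag X).
Notation ext th a := [set y | Dom th y /\ sat a th y].

Lemma satImp a b th x : sat (Imp a b) th x <-> (sat a th x -> sat b th x).
Proof. simpl; split; [move=> H Ha; apply: NNPP => Hb; exact: H|tauto]. Qed.

Lemma satIff a b th x : (sat a th x <-> sat b th x) -> sat (Iff a b) th x.
Proof. move=> H; simpl; tauto. Qed.

Lemma peval_sat f th x : peval (fun g => sat g th x) f <-> sat f th x.
Proof.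
elim: f => //= [a IH|a IHa b IHb]; [by rewrite IH|by rewrite IHa IHb].
Qed.

Lemma sub_int (O A : set X) : open O -> O `<=` A -> O `<=` A°.
Proof. by move=> oO; rewrite (open_subsetE _ oO). Qed.

Lemma restr_dom th U y : Dom (restr th U) y <-> U y /\ Dom th y.
Proof.
rewrite /Dom /restr /=; case: (pselect (U y)) => Uy.
  rewrite asboolT //; case: (th y) => [g|]; split => //; by case.
rewrite asboolF //; split=> //; by case.
Qed.

Lemma restr_some th U y g : U y -> th y = Some g ->
  restr th U y = Some (fun i => g i `&` U).
Proof. by move=> Uy E; rewrite /restr asboolT // E. Qed.

Lemma restr_some_inv th U y g' : restr th U y = Some g' ->
  U y /\ exists g, th y = Some g /\ g' = (fun i => g i `&` U).
Proof.
rewrite /restr; case: (pselect (U y)) => Uy; last by rewrite asboolF.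
rewrite asboolT //; case: (th y) => [g|] // [<-]; split=> //; by exists g.
Qed.

Lemma int_dom th a : (ext th a)° `<=` Dom th.
Proof. by move=> y /interior_subset []. Qed.

Lemma restr_restr th U V : V `<=` U -> restr (restr th U) V = restr th V.
Proof.
move=> VU; apply: funext => y; rewrite /restr.
case: (pselect (V y)) => Vy; last by rewrite !asboolF.
rewrite !asboolT //; last exact: VU.
case: (th y) => // g; congr Some; apply: funext => i.
by rewrite -setIA (setIidr VU).
Qed.

Variable hAg : 0 < #|Ag|.

Lemma some_ag : Ag.
Proof. by case: (pickP (@predT Ag)) => [i _|/eq_card0 H]; [exact i|exfalso; move: hAg; rewrite H]. Defined.

Lemma dom_int th x : tm_Phi M th -> Dom th x -> (Dom th)° x.
Proof.
move=> Hth Dx; have [H1 _] := tm_Phi_ax Hth.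
case E: (th x) Dx => [g|] // _.
have [og [gx [gD _]]] := H1 _ _ E some_ag.
exact: (sub_int og gD).
Qed.

Lemma ax_EL_sound f : ax_EL f -> forall th x, tm_Phi M th -> Dom th x -> sat f th x.
Proof.
move=> Hf th x Hth Dx; have [H1 H5] := tm_Phi_ax Hth.
case: Hf.
- move=> f0 Ht; apply/peval_sat; exact: Ht.
- move=> i a b; apply/satImp => Hab; apply/satImp => Ha g E y gy.
  by move/satImp: (Hab g E y gy); apply; exact: Ha g E y gy.
- move=> i a; apply/satImp => Ha; case E: (th x) Dx => [g|] // _.
  have [_ [gx _]] := H1 _ _ E i; exact: Ha E x gx.
- move=> i a; apply/satImp => Ha g E y gy h E' z hz.
  have [_ [_ [_ H4]]] := H1 _ _ E i.
  apply: (Ha _ E z); by rewrite (H4 _ _ E' gy).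
- move=> i a; apply/satImp => /= Hn g E y gy Hk; apply: Hn => h E' z hz.
  have [_ [_ [_ H4]]] := H1 _ _ E i.
  have [_ [_ [gD _]]] := H1 _ _ E i.
  move: hz; rewrite E in E'; case: E' => <- hz.
  case Ey: (th y) (gD _ gy) => [hy|] // _.
  apply: (Hk hy Ey z); by rewrite -(H4 _ _ Ey gy).
- move=> a b; apply/satImp => Hab; apply/satImp => Ha.
  have := interiorI (ext th (Imp a b)) (ext th a).
  move=> eq; have : ((ext th (Imp a b)) `&` (ext th a))° x by rewrite eq.
  apply: interiorS => y [[Dy Hi] [_ Hy]]; split=> //.
  by move/satImp: Hi; apply.
- move=> a; apply/satImp => /= /interior_subset [] //.
- move=> a; apply/satImp => /= Hi.
  apply: (sub_int (@open_interior _ _)) Hi => y Hy; split=> //.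
  exact: int_dom Hy.
- move=> i a; apply/satImp => /= Ha.
  case E: (th x) Dx => [g|] // _.
  have [og [gx [gD _]]] := H1 _ _ E i.
  apply: (sub_int og) gx => y gy; split; [exact: gD|exact: Ha E y gy].
Qed.

Lemma ax_R_sound f : ax_R f -> forall th x, sat f th x.
Proof.
move=> Hf th x; case: Hf.
- move=> a p; apply: satIff; split.
    by move=> H; apply/satImp.
  by move/satImp.
- move=> a b; apply: satIff; split.
    move=> H; apply/satImp => Ux /= H2; exact: H Ux (H2 Ux).
  move/satImp => H /= Ux Hb; exact: (H Ux) (fun _ => Hb).
- move=> a b c; apply: satIff => /=; tauto.
- move=> a b; apply: satIff; split.
    move=> H; apply/satImp => Ux; move: (H Ux); apply: interiorS.
    move=> y [/restr_dom [Uy Dy] Hb]; split=> // _; exact: Hb.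
  move/satImp => H Ux; have Hi := H Ux.
  have : ((ext th a)° `&` (ext th (Ann a b))°) x by split.
  apply: sub_int; first exact: openI (@open_interior _ _) (@open_interior _ _).
  move=> y [Uy /interior_subset [Dy Hb]]; split; first exact/restr_dom.
  exact: Hb Uy.
- move=> i a b; apply: satIff; split.
    move=> H; apply/satImp => Ux g E y gy Uy.
    exact: (H Ux _ (restr_some Ux E) y (conj gy Uy)).
  move/satImp => H Ux g' /restr_some_inv [_ [g [E ->]]] y [gy Uy].
  exact: (H Ux g E y gy Uy).
- move=> a b c; apply: satIff.
  set U := (ext th a)°.
  set th' := restr th U.
  set U2 := (ext th' b)°.
  have U2U : U2 `<=` U by move=> y /int_dom /restr_dom [].
  have UD : U `<=` Dom th by exact: int_dom.
  have U3E : (ext th (Neg (Ann a (Neg (Int b)))))° = U2.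
    have -> : ext th (Neg (Ann a (Neg (Int b)))) = U2.
      apply/seteqP; split => y /=.
        by move=> [_ H]; apply: NNPP => H2; apply: H => _.
      by move=> H; split; [exact/UD/U2U|move=> H2; exact: H2 (U2U _ H) H].
    by apply/interior_id; exact: open_interior.
  have RR : restr th' U2 = restr th U2 by exact: restr_restr.
  rewrite /= -/U -/th' -/U2 U3E RR; split.
    by move=> H Hx; exact: H (U2U _ Hx) Hx.
  by move=> H _; exact: H.
Qed.

Lemma valid_mp a b : valid M a -> valid M (Imp a b) -> valid M b.
Proof. move=> Ha Hab th x Hth Dx; move/satImp: (Hab th x Hth Dx); apply; exact: Ha. Qed.

Lemma valid_necK i a : valid M a -> valid M (K i a).
Proof.
move=> Ha th x Hth Dx g E y gy; have [H1 _] := tm_Phi_ax Hth.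
have [_ [_ [gD _]]] := H1 _ _ E i; exact: Ha _ _ Hth (gD _ gy).
Qed.

Lemma valid_necInt a : valid M a -> valid M (Int a).
Proof.
move=> Ha th x Hth Dx; move: (dom_int Hth Dx); apply: interiorS => y Dy.
split=> //; exact: Ha.
Qed.

Lemma valid_necAnn b a : valid M a -> valid M (Ann b a).
Proof.
move=> Ha th x Hth Dx Ux; have [_ H5] := tm_Phi_ax Hth.
apply: Ha; first exact: H5 _ (@open_interior _ _).
exact/restr_dom.
Qed.

End Sound.

Theorem mainTheorem5 (Prp : countType) (Ag : finType) (hAg : 0 < #|Ag|)
  (X : topologicalType) (M : topo_model Prp Ag X) :
  (forall f : form Prp Ag, EL_thm f -> valid M f) /\
  (forall f : form Prp Ag, PAL_thm f -> valid M f).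
Proof.
split.
- move=> f; elim=> {f} [f Hf _|a b _ Ha _ Hab|i a _ Ha|a _ Ha].
  + move=> th x; exact: ax_EL_sound.
  + exact: valid_mp Ha Hab.
  + exact: valid_necK.
  + exact: valid_necInt.
- move=> f; elim=> {f} [f Hf|f Hf|a b _ Ha _ Hab|i a _ Ha|a _ Ha|b a _ Ha].
  + move=> th x; exact: ax_EL_sound.
  + move=> th x _ _; exact: ax_R_sound.
  + exact: valid_mp Ha Hab.
  + exact: valid_necK.
  + exact: valid_necInt.
  + exact: valid_necAnn.
Qed.
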